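(* Let $G=(V,E)$ be a graph and let $\boldsymbol{\pi}=(\pi_1,\dots,\pi_n)$ be a collection of paths, where $\pi_k=(v_k(0),v_k(1),\dots,v_k(\ell_k))$ for each $k$. Suppose $\boldsymbol{\pi}$ is disentangled. Then for every agent index $i$ and every timestep $t\ge \ell_i$, there exists at least one extension of $\pi_i$ up to timestep $t$, i.e. nodes $v_i(\ell_i+1),\dots,v_i(t)$ (each $v_i(s+1)$ equal to $v_i(s)$ or adjacent to it), such that the collection obtained by replacing $\pi_i$ with $(v_i(0),\dots,v_i(\ell_i),v_i(\ell_i+1),\dots,v_i(t))$ is still disentangled.
   Context: A path of agent $a_k$ is a sequence of nodes $\pi_k=(v_k(0),\dots,v_k(\ell_k))$, where $v_k(s)$ is the node occupied at discrete timestep $s$ and $\ell_k=|\pi_k|-1$; consecutive nodes are equal (staying) or adjacent in $G$; paths may only be extended by appending nodes at the end. Two paths $\pi_i,\pi_j$ with $\ell_i\le \ell_j$ are called disentangled if (1) $v_i(t)\ne v_j(t)$ for all $0\le t\le \ell_i$; (2) $v_i(t)\ne v_j(t-1)$ and $v_i(t-1)\ne v_j(t)$ for all $0<t\le \ell_i$; and (3) $v_i(\ell_i)\ne v_j(t)$ for all $\ell_i+1\le t\le \ell_j$. A collection $\boldsymbol{\pi}$ of paths is disentangled if every pair of its paths is disentangled. *)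

(* Defs.v *)
From mathcomp Require Import all_boot.
Set Implicit Arguments. Unset Strict Implicit. Unset Printing Implicit Defensive.

Section Paths.
Variable V : eqType.

(* A path pi = (v(0),...,v(l)) is a nonempty sequence of nodes; v(s) is
   [onth pi s] (= Some v(s) for s <= l). *)
Definition plen (p : seq V) : nat := (size p).-1.

Definition is_path (adj : rel V) (p : seq V) : Prop :=
  match p with
  | [::] => False
  | x :: q => path (fun a b => (a == b) || adj a b) x q
  end.

(* conditions (1)-(3), for l_p <= l_q *)
Definition disentangled_ord (p q : seq V) : Prop :=
  [/\ (forall t, t <= plen p -> onth p t <> onth q t),
      (forall t, 0 < t <= plen p ->
          onth p t <> onth q t.-1 /\ onth p t.-1 <> onth q t)
    & (forall t, plen p < t <= plen q -> onth p (plen p) <> onth q t)].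

Definition disentangled_pair (p q : seq V) : Prop :=
  if plen p <= plen q then disentangled_ord p q else disentangled_ord q p.

Definition disentangled (n : nat) (pis : 'I_n -> seq V) : Prop :=
  forall i j : 'I_n, i != j -> disentangled_pair (pis i) (pis j).

End Paths.

(* Main.v *)
Require Import Defs.
From mathcomp Require Import all_boot.
From mathcomp Require Import zify.

Section Aux.
Variable V : eqType.
Implicit Types f g h : nat -> option V.

Definition D f l g L : Prop :=
  [/\ (forall t, t <= l -> f t <> g t),
      (forall t, 0 < t <= l -> f t <> g t.-1 /\ f t.-1 <> g t)
    & (forall t, l < t <= L -> f l <> g t)].

Section Ext.
Variables (f g h : nat -> option V) (l l' L : nat).
Hypothesis hll : l <= l'.
Hypothesis hg1 : forall s, s <= l -> g s = f s.
Hypothesis hg2 : forall s, l <= s <= l' -> g s = f l.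

Lemma L1 : l' <= L -> D f l h L -> D g l' h L.
Proof.
move=> hl'L [H1 H2 H3]; split.
- move=> s hs; case: (leqP s l) => hsl.
  + have -> : g s = f s by apply: hg1; lia.
    by apply: H1.
  + have -> : g s = f l by apply: hg2; lia.
    by apply: H3; lia.
- move=> s hs; case: (leqP s l) => hsl.
  + have -> : g s = f s by apply: hg1; lia.
    have -> : g s.-1 = f s.-1 by apply: hg1; lia.
    by apply: H2; lia.
  + have -> : g s = f l by apply: hg2; lia.
    have -> : g s.-1 = f l by apply: hg2; lia.
    split; last by apply: H3; lia.
    case: (eqVneq s.-1 l) => e; first by rewrite e; apply: H1.
    by apply: H3; lia.
- move=> s hs; have -> : g l' = f l by apply: hg2; lia.
  by apply: H3; lia.
Qed.

Lemma L2 : l <= L -> L < l' -> D f l h L -> D h L g l'.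
Proof.
move=> hlL hLl' [H1 H2 H3]; split.
- move=> s hs; case: (leqP s l) => hsl.
  + have -> : g s = f s by apply: hg1; lia.
    by apply/nesym; apply: H1.
  + have -> : g s = f l by apply: hg2; lia.
    by apply/nesym; apply: H3; lia.
- move=> s hs; case: (leqP s l) => hsl.
  + have -> : g s = f s by apply: hg1; lia.
    have -> : g s.-1 = f s.-1 by apply: hg1; lia.
    have [a b] : f s <> h s.-1 /\ f s.-1 <> h s by apply: H2; lia.
    by split; apply/nesym.
  + have -> : g s = f l by apply: hg2; lia.
    have -> : g s.-1 = f l by apply: hg2; lia.
    split; apply/nesym; first by apply: H3; lia.
    case: (eqVneq s.-1 l) => e; first by rewrite e; apply: H1.
    by apply: H3; lia.
- move=> s hs; have -> : g s = f l by apply: hg2; lia.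
  apply/nesym.
  case: (eqVneq L l) => e; first by rewrite e; apply: H1.
  by apply: H3; lia.
Qed.

Lemma L3 : L < l -> D h L f l -> D h L g l'.
Proof.
move=> hLl [H1 H2 H3]; split.
- move=> s hs; have -> : g s = f s by apply: hg1; lia.
  by apply: H1.
- move=> s hs; have -> : g s = f s by apply: hg1; lia.
  have -> : g s.-1 = f s.-1 by apply: hg1; lia.
  by apply: H2.
- move=> s hs; case: (leqP s l) => hsl.
  + have -> : g s = f s by apply: hg1; lia.
    by apply: H3; lia.
  + have -> : g s = f l by apply: hg2; lia.
    by apply: H3; lia.
Qed.
End Ext.

Lemma Lsym f g l : D f l g l -> D g l f l.
Proof.
move=> [H1 H2 H3]; split.
- by move=> s hs; apply/nesym; apply: H1.
- move=> s hs; have [a b] := H2 s hs; split; exact/nesym.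
- move=> s hs; lia.
Qed.

Lemma pair_sym (p q : seq V) : disentangled_pair p q -> disentangled_pair q p.
Proof.
rewrite /disentangled_pair.
case: (leqP (plen p) (plen q)) => h1; case: (leqP (plen q) (plen p)) => h2 //.
all: have e : plen p = plen q by lia.
- change (D (onth p) (plen p) (onth q) (plen q) -> D (onth q) (plen q) (onth p) (plen p)).
  rewrite -e; exact: Lsym.
- change (D (onth q) (plen q) (onth p) (plen p) -> D (onth p) (plen p) (onth q) (plen q)).
  rewrite -e; exact: Lsym.
Qed.

Lemma onth_last (a : V) q : onth (a :: q) (size q) = Some (last a q).
Proof. by elim: q a => //= b q IH a; rewrite -IH. Qed.

Lemma pair_ext (a : V) q m (r : seq V) :
  disentangled_pair (a :: q) r ->
  disentangled_pair ((a :: q) ++ nseq m (last a q)) r.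
Proof.
set p := a :: q; set p' := p ++ _.
have hl : plen p = size q by [].
have hl' : plen p' = size q + m by rewrite /plen /p' size_cat size_nseq /=; lia.
have hg1 : forall s, s <= plen p -> onth p' s = onth p s.
  by move=> s hs; rewrite /p' onth_cat ifT //; rewrite hl in hs; rewrite /=; lia.
have hg2 : forall s, plen p <= s <= plen p' -> onth p' s = onth p (plen p).
  move=> s hs; rewrite hl onth_last /p' onth_cat /=.
  case: ifP => h; first by (have -> : s = size q by lia); rewrite onth_last.
  rewrite onth_nseq ifT //; lia.
have hll : plen p <= plen p' by lia.
rewrite /disentangled_pair -!/(D _ _ _ _).
case: (leqP (plen p) (plen r)) => h1.
- case: (leqP (plen p') (plen r)) => h2.
  + exact: (L1 _ _ (onth r) _ _ _ hll hg1 hg2 h2).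
  + exact: (L2 _ _ (onth r) _ _ _ hll hg1 hg2 h1 h2).
- rewrite leqNgt (_ : plen r < plen p') //; last by lia.
  exact: (L3 _ _ (onth r) _ _ _ hll hg1 hg2 h1).
Qed.

Lemma path_nseq (r : rel V) (x : V) m : r x x -> path r x (nseq m x).
Proof. by move=> hx; elim: m => //= m ->; rewrite hx. Qed.

End Aux.

Theorem proposition3p6 (V : eqType) (adj : rel V)
  (adj_sym : symmetric adj) (adj_irr : irreflexive adj)
  (n : nat) (pis : 'I_n -> seq V)
  (hpaths : forall k, is_path adj (pis k))
  (hdis : disentangled pis) :
  forall (i : 'I_n) (t : nat), plen (pis i) <= t ->
  exists ext : seq V,
    [/\ size (pis i ++ ext) = t.+1,
        is_path adj (pis i ++ ext)
      & disentangled (fun k => if k == i then pis i ++ ext else pis k)].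
Proof.
move=> i t.
have hp := hpaths i.
have hdi : forall k, k != i -> disentangled_pair (pis i) (pis k) /\ disentangled_pair (pis k) (pis i).
  by move=> k hk; split; apply: hdis; rewrite // eq_sym.
move: hp hdi; case: (pis i) => [//|a q] hp hdi ht.
exists (nseq (t - size q) (last a q)); split.
- rewrite size_cat size_nseq /=; rewrite /plen /= in ht; lia.
- rewrite /is_path /= cat_path hp /=; apply: path_nseq; by rewrite eqxx.
- move=> j k hjk.
  case: (eqVneq j i) => hj; case: (eqVneq k i) => hk.
  + by rewrite hj hk eqxx in hjk.
  + have [h _] := hdi k hk; exact: pair_ext.
  + have [_ h] := hdi j hj; apply: pair_sym; apply: pair_ext; exact: pair_sym.
  + exact: hdis.
Qed.
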